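(* Consider the contextual learning setting in which all contexts $\sigma_1,\dots,\sigma_T$ lie in a known finite set $P\subseteq\Sigma$. Let $\Gamma\in[0,1]^{|\mathcal X|\times N}$ be $(\kappa,\delta)$-admissible, $\epsilon\ge0$, and $D$ a $\big(\rho,\frac{1+2\epsilon}{\delta}\big)$-dispersed distribution. Run Generalized FTPL in the contextual setting with translation matrix $\Gamma^P$ (one perturbation $\alpha_{\sigma,j}\sim D$ per column $(\sigma,j)\in P\times[N]$). Then the chosen policies $\pi_1,\dots,\pi_{T+1}$ satisfy \[ \mathbb E\Big[\sum_{t=1}^T f_c(\pi_{t+1},(\sigma_t,y_t))-f_c(\pi_t,(\sigma_t,y_t))\Big]\le 2TN\kappa\rho . \]
   Context: Original setting: finite learner action set $\mathcal X$, adversary action set $\mathcal Y$, payoff $f:\mathcal X\times\mathcal Y\to[0,1]$. Contextual setting: policy class $\Pi$ of maps $\Sigma\to\mathcal X$, adversary actions $(\sigma_t,y_t)\in\Sigma\times\mathcal Y$ fixed in advance, payoff $f_c(\pi,(\sigma,y))=f(\pi(\sigma),y)$. $\Gamma^P$: matrix with rows indexed by $\pi\in\Pi$, columns by $(\sigma,j)\in P\times[N]$, entries $\Gamma^P_{\pi,(\sigma,j)}=\Gamma_{\pi(\sigma),j}$. Generalized FTPL in the contextual setting: draw the perturbation vector $\vec\alpha$ once with i.i.d. $D$ entries; for $t=1,\dots,T+1$, $\pi_t$ is any policy with $\sum_{\tau<t}f_c(\pi_t,(\sigma_\tau,y_\tau))+\vec\alpha\cdot\Gamma^P_{\pi_t}\ge\sum_{\tau<t}f_c(\pi,(\sigma_\tau,y_\tau))+\vec\alpha\cdot\Gamma^P_{\pi}-\epsilon$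 for all $\pi\in\Pi$. $\Gamma$ is $(\kappa,\delta)$-admissible if its rows are distinct, each column has at most $\kappa$ distinct values, and distinct values in a column differ by at least $\delta$. $D$ is $(\rho,L)$-dispersed if every interval of length $L$ has probability at most $\rho$. *)

(* Defs.v *)
From HB Require Import structures.
From mathcomp Require Import all_boot all_order all_algebra.
From mathcomp Require Import all_classical all_reals all_analysis.
Set Implicit Arguments. Unset Strict Implicit. Unset Printing Implicit Defensive.
Import Order.TTheory GRing.Theory Num.Theory.
Local Open Scope classical_set_scope.
Local Open Scope ring_scope.

Definition admissible (R : realType) (X : finType) (N : nat)
    (Gamma : X -> 'I_N -> R) (kappa : nat) (delta : R) : Prop :=
  [/\
      (forall x x' : X, x <> x' -> exists j, Gamma x j <> Gamma x' j),
      (forall j, (size (undup [seq Gamma x j | x <- enum X]) <= kappa)%N) &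
      (forall j (x x' : X), Gamma x j <> Gamma x' j ->
                             delta <= `|Gamma x j - Gamma x' j|)].

Definition dispersed (R : realType) (D : probability R R) (rho L : R) : Prop :=
  forall a : R, (D [set` `[a, (a + L)%R]] <= rho%:E)%E.

Definition mutually_independent (d : measure_display) (Omega : measurableType d)
    (R : realType) (Pr : probability Omega R) (I : finType) (Z : I -> Omega -> R)
    : Prop :=
  forall B : I -> set R, (forall i, measurable (B i)) ->
    Pr (\bigcap_(i in [set: I]) (Z i @^-1` B i)) =
    \big[*%E/1%E]_(i : I) Pr (Z i @^-1` B i).

Definition identically_distributed (d : measure_display) (Omega : measurableType d)
    (R : realType) (Pr : probability Omega R) (I : finType) (Z : I -> Omega -> R)
    (D : probability R R) : Prop :=
  forall i (B : set R), measurable B -> Pr (Z i @^-1` B) = D B.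

Definition fc (Sigma X Y : Type) (R : realType) (f : X -> Y -> R)
    (pi : Sigma -> X) (sigma : Sigma) (y : Y) : R := f (pi sigma) y.

(* Row pi of Gamma^P dotted with the perturbation vector alpha, where
   P is a finite set of contexts embedded in Sigma by iota, and
   Gamma^P_{pi,(s,j)} = Gamma_{pi(s), j}. *)
Definition pert_dot (Sigma : Type) (X P : finType) (N : nat) (R : realType)
    (iota : P -> Sigma) (Gamma : X -> 'I_N -> R) (alpha : P -> 'I_N -> R)
    (pi : Sigma -> X) : R :=
  \sum_(s : P) \sum_(j < N) alpha s j * Gamma (pi (iota s)) j.

Definition cum_payoff (Sigma X Y : Type) (P : finType) (R : realType)
    (iota : P -> Sigma) (f : X -> Y -> R) (sigma : nat -> P) (y : nat -> Y)
    (t : nat) (pi : Sigma -> X) : R :=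
  \sum_(tau < t) fc f pi (iota (sigma tau)) (y tau).

(* Main.v *)
Require Import Defs.
From HB Require Import structures.
From mathcomp Require Import all_boot all_order all_algebra.
From mathcomp Require Import all_classical all_reals all_analysis.
From mathcomp Require Import ring lra.
Import Order.TTheory GRing.Theory Num.Theory.
Local Open Scope classical_set_scope.
Local Open Scope ring_scope.

Section PartA.
Context (R : realType) (d : measure_display) (Omega : measurableType d)
  (Pr : probability Omega R).
Context (I : finType) (Zc : I -> Omega -> R) (i0 : I) (D : probability R R).
Hypothesis mZ : forall i, measurable_fun setT (Zc i).
Hypothesis indep : mutually_independent Pr Zc.
Hypothesis idd : identically_distributed Pr Zc D.

Definition Rect : set (set Omega) := [set A | exists B : I -> set R,
  (forall i, measurable (B i)) /\ B i0 = setT /\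
  A = \bigcap_(i in [set: I]) (Zc i @^-1` B i)].

Lemma mZpre i B : measurable B -> measurable (Zc i @^-1` B).
Proof. by move=> mB; rewrite -[X in measurable X]setTI; exact: mZ. Qed.

Lemma Rect_meas : Rect `<=` measurable.
Proof.
move=> _ [B [mB [_ ->]]]; apply: fin_bigcap_measurable.
  exact: finite_finset.
by move=> i _; exact: mZpre.
Qed.

Lemma gRect_meas : <<s Rect >> `<=` measurable.
Proof. apply: smallest_sub; [exact: sigma_algebra_measurable|exact: Rect_meas]. Qed.


Local Open Scope ereal_scope.

Lemma Rect_indep A B0 : Rect A -> measurable B0 ->
  Pr (A `&` Zc i0 @^-1` B0) = Pr A * D B0.
Proof.
move=> [B [mB [Bi0 ->]]] mB0.
pose B' := fun i => if i == i0 then B0 else B i.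
have mB' : forall i, measurable (B' i) by move=> i; rewrite /B'; case: ifP.
have -> : \bigcap_(i in [set: I]) (Zc i @^-1` B i) `&` Zc i0 @^-1` B0 =
          \bigcap_(i in [set: I]) (Zc i @^-1` B' i).
  apply/seteqP; split => w /=.
    move=> [H1 H2] i _; rewrite /B'; case: ifP => [/eqP->//|_]; exact: H1.
  move=> H; split; last by have := H i0 Logic.I; rewrite /B' eqxx.
  move=> i _; have := H i Logic.I; rewrite /B'; case: ifP => [/eqP->|//].
  by rewrite Bi0.
rewrite !indep //.
rewrite (bigD1 i0) //= [X in _ = X * _](bigD1 i0) //= /B' eqxx Bi0.
rewrite preimage_setT probability_setT mul1e muleC idd //.
congr (_ * _); apply: eq_bigr => i /negbTE ->; done.
Qed.


Lemma gRect_indep B0 : measurable B0 -> forall A, <<s Rect >> A ->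
  Pr (A `&` Zc i0 @^-1` B0) = Pr A * D B0.
Proof.
move=> mB0.
have mE : measurable (Zc i0 @^-1` B0) by exact: mZpre.
pose T := g_sigma_algebraType Rect.
apply: (@dynkin_induction _ T Rect
   [set A | Pr (A `&` Zc i0 @^-1` B0) = Pr A * D B0]).
- by [].
- move=> _ _ [B [mB [Bi0 ->]]] [C [mC [Ci0 ->]]].
  exists (fun i => B i `&` C i); split; first by move=> i; exact: measurableI.
  split; first by rewrite Bi0 Ci0 setIT.
  apply/seteqP; split => w /=.
    by move=> [H1 H2] i _; split; [exact: H1|exact: H2].
  by move=> H; split => i _; have [] := H i Logic.I.
- by rewrite /= setTI probability_setT mul1e idd.
- by move=> A RA; exact: Rect_indep.
- move=> S mS /= PS.
  have mS' : measurable (S : set Omega) by exact: gRect_meas.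
  have Efin : Pr (Zc i0 @^-1` B0) < +oo.
    by have := fin_num_measure Pr _ mE; rewrite fin_numElt => /andP[].
  have h : Pr (~` S `&` Zc i0 @^-1` B0) =
      Pr (Zc i0 @^-1` B0) - Pr (Zc i0 @^-1` B0 `&` S).
    by rewrite setIC -setDE; apply: measureD.
  have PS' : Pr (Zc i0 @^-1` B0 `&` S) = Pr S * D B0 by rewrite setIC.
  rewrite h PS' probability_setC // idd //.
  have f1 : Pr S \is a fin_num by rewrite fin_num_measure.
  have f2 : D B0 \is a fin_num by rewrite fin_num_measure.
  rewrite -(fineK f1) -(fineK f2) -EFinM -EFinB -EFinB -EFinM; congr EFin.
  by rewrite mulrBl mul1r.
- move=> F mF tF PF /=.
  have mF' n : measurable (F n : set Omega) by apply: gRect_meas; exact: mF.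
  rewrite setI_bigcupl measure_bigcup //; last first.
  - apply/trivIsetP => i j _ _ ij; rewrite setIACA setIid.
    by move/trivIsetP : tF => /(_ i j Logic.I Logic.I ij) ->; rewrite set0I.
  - by move=> i _; apply: measurableI.
  have -> : Pr (\bigcup_k F k) = \sum_(i <oo | i \in [set: nat]) Pr (F i).
    by apply: measure_bigcup => // i _; exact: mF'.
  transitivity (\sum_(i <oo | i \in [set: nat]) (Pr (F i) * D B0)).
    by apply: eq_eseriesr => i _; exact: PF.
  have f2 : D B0 \is a fin_num by rewrite fin_num_measure.
  rewrite -(fineK f2).
  transitivity (\sum_(i <oo | i \in [set: nat]) ((fine (D B0))%:E * Pr (F i))).
    by apply: eq_eseriesr => i _; rewrite muleC.
  by rewrite nneseriesZl // muleC.
Qed.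


Definition OmW := g_sigma_algebraType Rect.
Definition toW (w : Omega) : OmW := w.

Lemma mtoW : measurable_fun setT toW.
Proof. by move=> _ A mA; rewrite setTI; exact: gRect_meas. Qed.

HB.instance Definition _ := isMeasurableFun.Build _ _ _ _ toW mtoW.

Definition jnt (w : Omega) : OmW * R := (toW w, Zc i0 w).

Lemma mjnt : measurable_fun setT jnt.
Proof. by apply: measurable_fun_pair; [exact: mtoW|exact: mZ]. Qed.

HB.instance Definition _ := isMeasurableFun.Build _ _ _ _ jnt mjnt.

Definition muW := distribution Pr toW.
Definition nuJ := distribution Pr jnt.

Lemma nuJ_prod X : measurable X -> (muW \x D) X = nuJ X.
Proof.
apply: product_measure_unique => A B mA mB.
rewrite /nuJ /muW /distribution /pushforward.
change (Pr (jnt @^-1` (A `*` B)) = Pr (toW @^-1` A) * D B).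
have -> : jnt @^-1` (A `*` B) = (A : set Omega) `&` Zc i0 @^-1` B by [].
have -> : toW @^-1` A = (A : set Omega) by [].
by rewrite gRect_indep.
Qed.


Lemma band_bound (thr : OmW -> R) (c rho : R) :
  measurable_fun setT thr ->
  (forall a : R, D [set` `[a, (a + c)%R]] <= rho%:E) ->
  Pr [set w | (thr w <= Zc i0 w <= thr w + c)%R] <= rho%:E.
Proof.
move=> mthr Drho.
pose S := [set p : OmW * R | (thr p.1 <= p.2 <= thr p.1 + c)%R].
have mS : measurable S.
  have -> : S = (fun p : OmW * R => p.2 - thr p.1)%R @^-1` [set` `[0%R, c]].
    by apply/seteqP; split => p; rewrite /S /= in_itv /= subr_ge0 lerBlDl.
  rewrite -[X in measurable X]setTI; apply: measurable_realfun.measurable_funB => //.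
  exact: measurableT_comp mthr measurable_fst.
change (Pr (jnt @^-1` S) <= rho%:E).
change (nuJ S <= rho%:E).
rewrite -nuJ_prod //.
rewrite /product_measure1 /=.
apply: (@le_trans _ _ (\int[muW]_x (cst rho%:E) x)).
  apply: ge0_le_integral => //.
  - exact: measurable_fun_xsection.
  - move=> x _ /=.
    have -> : xsection S x = [set` `[thr x, (thr x + c)%R]].
      apply/seteqP; split => y; rewrite /xsection /= inE /= in_itv //=.
    exact: Drho.
rewrite integral_cst //= probability_setT mule1 //.
Qed.


Lemma coordW i : i != i0 -> measurable_fun setT (fun w : OmW => Zc i w).
Proof.
move=> ne _ B mB; rewrite setTI; apply: sub_gen_smallest.
exists (fun k => if k == i then B else setT); split.
  by move=> k; case: ifP.
split; first by rewrite eq_sym (negbTE ne).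
apply/seteqP; split => w /=.
  by move=> Bw k _; case: ifP => [/eqP->//|].
by move=> H; have := H i Logic.I; rewrite eqxx.
Qed.

End PartA.


Lemma core_det (R : realType) (Qt : Type) (inQ : Qt -> Prop)
  (G0 G1 beta : Qt -> R) (b a eps delta M m : R) (q1 q2 : Qt) :
  0 <= eps -> 0 < delta ->
  (forall q, inQ q -> G0 q <= G1 q <= G0 q + 1) ->
  (forall q, inQ q -> b < beta q -> delta <= beta q - b) ->
  inQ q1 -> inQ q2 -> beta q2 = b -> b < beta q1 ->
  (forall q, inQ q -> G0 q + a * beta q - eps <= G0 q1 + a * beta q1) ->
  (forall q, inQ q -> G1 q + a * beta q - eps <= G1 q2 + a * beta q2) ->
  (forall q, inQ q -> beta q = b -> G0 q <= M) ->
  (exists2 q, inQ q & beta q = b /\ G0 q = M) ->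
  (forall q, inQ q -> b < beta q -> m <= (M - G0 q - eps) / (beta q - b)) ->
  (exists2 q, inQ q & b < beta q /\ m = (M - G0 q - eps) / (beta q - b)) ->
  m <= a <= m + (1 + 2 * eps) / delta.
Proof.
move=> eps0 del0 G01 sep Q1 Q2 b2 b1 opt0 opt1 Mub [qs Qs [bs Ms]] mlb [qm Qm [bm mE]].
apply/andP; split.
  apply: le_trans (mlb _ Q1 b1) _.
  have pos : 0 < beta q1 - b by rewrite subr_gt0.
  rewrite ler_pdivrMr //.
  have := opt0 _ Qs; rewrite bs Ms => h.
  by rewrite mulrBr; lra.
rewrite mE.
have pos : 0 < beta qm - b by rewrite subr_gt0.
have dle := sep _ Qm bm.
have h1 := opt1 _ Qm; rewrite b2 in h1.
have := G01 _ Qm; have := G01 _ Q2; have := Mub _ Q2 b2 => hM /andP[g1 g2] /andP[g3 g4].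
have key : a * (beta qm - b) <= (M - G0 qm - eps) + (1 + 2 * eps).
  by rewrite mulrBr; lra.
have : a <= (M - G0 qm - eps) / (beta qm - b) + (1 + 2 * eps) / (beta qm - b).
  by rewrite -mulrDl ler_pdivlMr.
move/le_trans; apply; rewrite lerD2l.
apply: ler_pM => //.
- lra.
- by rewrite invr_ge0 ltW.
- by rewrite lef_pV2 // posrE.
Qed.


Definition fmax (R : realType) (T : Type) (F : T -> R) (x0 : R) (s : seq T) :=
  foldr (fun q acc => Num.max (F q) acc) x0 s.
Definition fmin (R : realType) (T : Type) (F : T -> R) (x0 : R) (s : seq T) :=
  foldr (fun q acc => Num.min (F q) acc) x0 s.
Arguments fmax {R T}.
Arguments fmin {R T}.

Lemma fmax_cons (R : realType) (T : Type) (F : T -> R) x0 a s :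
  fmax F x0 (a :: s) = Num.max (F a) (fmax F x0 s).
Proof. by []. Qed.
Lemma fmin_cons (R : realType) (T : Type) (F : T -> R) x0 a s :
  fmin F x0 (a :: s) = Num.min (F a) (fmin F x0 s).
Proof. by []. Qed.

Lemma fmax_ge (R : realType) (T : eqType) (F : T -> R) x0 s q :
  q \in s -> F q <= fmax F x0 s.
Proof.
elim: s => // a s IH; rewrite inE ?fmax_cons ?fmin_cons => /orP[/eqP->|/IH h].
  by rewrite le_max lexx.
by rewrite le_max h orbT.
Qed.

Lemma fmax_att (R : realType) (T : eqType) (F : T -> R) x0 s :
  fmax F x0 s = x0 \/ exists2 q, q \in s & fmax F x0 s = F q.
Proof.
elim: s => [|a s IH]; first by left.
rewrite fmax_cons; case: (leP (F a) (fmax F x0 s)) => h.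
  case: IH => [->|[q qs ->]]; first by left.
  by right; exists q => //; rewrite inE qs orbT.
by right; exists a => //; rewrite inE eqxx.
Qed.

Lemma fmin_le (R : realType) (T : eqType) (F : T -> R) x0 s q :
  q \in s -> fmin F x0 s <= F q.
Proof.
elim: s => // a s IH; rewrite inE ?fmax_cons ?fmin_cons => /orP[/eqP->|/IH h].
  by rewrite ge_min lexx.
by rewrite ge_min h orbT.
Qed.

Lemma fmin_att (R : realType) (T : eqType) (F : T -> R) x0 s :
  fmin F x0 s = x0 \/ exists2 q, q \in s & fmin F x0 s = F q.
Proof.
elim: s => [|a s IH]; first by left.
rewrite fmin_cons; case: (leP (F a) (fmin F x0 s)) => h.
  by right; exists a => //; rewrite inE eqxx.
case: IH => [->|[q qs ->]]; first by left.
by right; exists q => //; rewrite inE qs orbT.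
Qed.

Lemma measurable_fmax d (Om : measurableType d) (R : realType) (T : Type)
  (F : T -> Om -> R) (x0 : Om -> R) s :
  (forall q, measurable_fun setT (F q)) -> measurable_fun setT x0 ->
  measurable_fun setT (fun w => fmax (F^~ w) (x0 w) s).
Proof.
move=> mF mx; elim: s => [|a s IH] //=.
exact: measurable_realfun.measurable_maxr.
Qed.

Lemma measurable_fmin d (Om : measurableType d) (R : realType) (T : Type)
  (F : T -> Om -> R) (x0 : Om -> R) s :
  (forall q, measurable_fun setT (F q)) -> measurable_fun setT x0 ->
  measurable_fun setT (fun w => fmin (F^~ w) (x0 w) s).
Proof.
move=> mF mx; elim: s => [|a s IH] //=.
exact: measurable_realfun.measurable_minr.
Qed.


Lemma le_sum_mem {R : realType} {I : eqType} {s : seq I} {F : I -> R} {i} :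
  (forall j, 0 <= F j) -> i \in s -> F i <= \sum_(j <- s) F j.
Proof.
move=> F0; elim: s => // a s IH; rewrite inE big_cons => /orP[/eqP->|h].
  by rewrite lerDl sumr_ge0.
by apply: le_trans (IH h) _; rewrite lerDr.
Qed.

Lemma le_sum_fin {R : realType} {I : finType} {F : I -> R} i :
  (forall j, 0 <= F j) -> F i <= \sum_j F j.
Proof. by move=> F0; rewrite (bigD1 i) //= lerDl sumr_ge0. Qed.

Lemma meas_fin d (Om : measurableType d) (R : realType) (X : finType)
  (h : Om -> X) (phi : X -> R) :
  (forall x, measurable [set w | h w = x]) ->
  measurable_fun setT (fun w => phi (h w)).
Proof.
move=> mh _ B mB; rewrite setTI.
have -> : (fun w => phi (h w)) @^-1` B =
    \bigcup_(x in [set x | B (phi x)]) [set w | h w = x].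
  apply/seteqP; split => w /=.
    by move=> Bw; exists (h w).
  by move=> [x /= Bx hx]; rewrite /preimage /= hx.
by apply: fin_bigcup_measurable => //; exact: finite_finset.
Qed.

Lemma sum_seq_const {R : realType} {I : Type} (s : seq I) (c : R) :
  \sum_(b <- s) c = (size s)%:R * c.
Proof.
elim: s => [|a s IH]; first by rewrite big_nil mul0r.
by rewrite big_cons IH /= -add1n natrD mulrDl mul1r.
Qed.

Section Main.
Context (R : realType) (X : finType) (Y Sigma : Type) (f : X -> Y -> R)
  (N : nat) (Gamma : X -> 'I_N -> R) (kappa : nat) (delta eps rho : R)
  (D : probability R R)
  (P : finType) (iota : P -> Sigma) (Pi : set (Sigma -> X))
  (T : nat) (sigma : nat -> P) (y : nat -> Y)
  (d : measure_display) (Omega : measurableType d) (Pr : probability Omega R)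
  (alpha : Omega -> P -> 'I_N -> R)
  (pi : nat -> (P -> 'I_N -> R) -> Sigma -> X).

Local Notation Ix := (P * 'I_N)%type.
Definition Zc : Ix -> Omega -> R := fun sj w => alpha w sj.1 sj.2.
Definition Qt := {ffun P -> X}.
Definition qof (p : Sigma -> X) : Qt := [ffun s => p (iota s)].
Definition inQ (q : Qt) : Prop := exists2 p, Pi p & qof p = q.
Definition cumq (t : nat) (q : Qt) : R := \sum_(tau < t) f (q (sigma tau)) (y tau).
Definition G0 (t : nat) (i0 : Ix) (q : Qt) (w : Omega) : R :=
  cumq t q + \sum_(s : P) \sum_(j < N)
     (if (s, j) == i0 then 0 else alpha w s j * Gamma (q s) j).

Lemma payoff_split t i0 p w :
  cum_payoff iota f sigma y t p + pert_dot iota Gamma (alpha w) p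
   = G0 t i0 (qof p) w + alpha w i0.1 i0.2 * Gamma (qof p i0.1) i0.2.
Proof.
rewrite /cum_payoff /G0 /cumq /pert_dot /fc.
have e1 : \sum_(tau < t) f (qof p (sigma tau)) (y tau) =
    \sum_(tau < t) f (p (iota (sigma tau))) (y tau).
  by apply: eq_bigr => i _; rewrite ffunE.
rewrite e1 -addrA; congr (_ + _).
rewrite pair_big /= [in RHS]pair_big /=.
rewrite (bigD1 i0) //= [in RHS](bigD1 i0) //= -surjective_pairing eqxx add0r.
rewrite addrC ffunE; congr (_ + _).
apply: eq_bigr => sj ne; rewrite -surjective_pairing (negbTE ne) ffunE //.
Qed.

Lemma cumqS t q : cumq t.+1 q = cumq t q + f (q (sigma t)) (y t).
Proof. by rewrite /cumq big_ord_recr. Qed.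

Lemma G0S t i0 q w : G0 t.+1 i0 q w = G0 t i0 q w + f (q (sigma t)) (y t).
Proof. by rewrite /G0 cumqS addrAC. Qed.


Definition cc := (1 + 2 * eps) / delta.
Definition sgn (dir : bool) : R := if dir then 1 else -1.
Definition inQb (q : Qt) : bool := `[< inQ q >].
Definition PB (s0 : P) (j0 : 'I_N) (b : R) (q : Qt) : bool :=
  inQb q && (Gamma (q s0) j0 == b).
Definition PG (s0 : P) (j0 : 'I_N) (b : R) (dir : bool) (q : Qt) : bool :=
  inQb q && (sgn dir * b < sgn dir * Gamma (q s0) j0).
Definition Mf t s0 j0 b (w : Omega) : R :=
  match [pick q | PB s0 j0 b q] with
  | Some q0 => fmax (fun q => G0 t (s0, j0) q w) (G0 t (s0, j0) q0 w)
                 [seq q <- enum Qt | PB s0 j0 b q]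
  | None => 0 end.
Definition hq t s0 j0 b dir (q : Qt) (w : Omega) : R :=
  (Mf t s0 j0 b w - G0 t (s0, j0) q w - eps) /
    (sgn dir * Gamma (q s0) j0 - sgn dir * b).
Definition mf t s0 j0 b dir (w : Omega) : R :=
  match [pick q | PG s0 j0 b dir q] with
  | Some q0 => fmin (fun q => hq t s0 j0 b dir q w) (hq t s0 j0 b dir q0 w)
                 [seq q <- enum Qt | PG s0 j0 b dir q]
  | None => 0 end.
Definition thr t s0 j0 b dir (w : Omega) : R :=
  if dir then mf t s0 j0 b dir w else - mf t s0 j0 b dir w - cc.

Local Notation OW s0 j0 := (OmW R d Omega Ix Zc (s0, j0)).

Lemma mG0 t s0 j0 q :
  measurable_fun setT (fun w : OW s0 j0 => G0 t (s0, j0) q w).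
Proof.
rewrite /G0; apply: measurable_realfun.measurable_funD; first exact: measurable_cst.
apply: measurable_sum => s; apply: measurable_sum => j.
case: eqP => [_|ne]; first exact: measurable_cst.
apply: measurable_realfun.measurable_funM; last exact: measurable_cst.
by apply: (@coordW R d Omega _ Zc (s0, j0) (s, j)); apply/eqP.
Qed.

Lemma mMf t s0 j0 b : measurable_fun setT (fun w : OW s0 j0 => Mf t s0 j0 b w).
Proof.
rewrite /Mf; case: pickP => [q0 _|_]; last exact: measurable_cst.
by apply: measurable_fmax => [q|]; exact: mG0.
Qed.

Lemma mhq t s0 j0 b dir q :
  measurable_fun setT (fun w : OW s0 j0 => hq t s0 j0 b dir q w).
Proof.
rewrite /hq; apply: measurable_realfun.measurable_funM; last exact: measurable_cst.
apply: measurable_realfun.measurable_funB; last exact: measurable_cst.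
apply: measurable_realfun.measurable_funB; [exact: mMf|exact: mG0].
Qed.

Lemma mmf t s0 j0 b dir : measurable_fun setT (fun w : OW s0 j0 => mf t s0 j0 b dir w).
Proof.
rewrite /mf; case: pickP => [q0 _|_]; last exact: measurable_cst.
by apply: measurable_fmin => [q|]; exact: mhq.
Qed.

Lemma mthr t s0 j0 b dir : measurable_fun setT (fun w : OW s0 j0 => thr t s0 j0 b dir w).
Proof.
rewrite /thr; case: dir; first exact: mmf.
apply: measurable_realfun.measurable_funB; last exact: measurable_cst.
exact: measurableT_comp (mmf _ _ _ _ _).
Qed.


Hypothesis f01 : forall x yy, 0 <= f x yy <= 1.
Hypothesis del0 : 0 < delta.
Hypothesis adm : admissible Gamma kappa delta.
Hypothesis eps0 : 0 <= eps.
Hypothesis ftpl : forall t w, (t <= T)%N ->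
     Pi (pi t (alpha w)) /\
     forall pi' : Sigma -> X, Pi pi' ->
       cum_payoff iota f sigma y t (pi t (alpha w))
         + pert_dot iota Gamma (alpha w) (pi t (alpha w))
       >= cum_payoff iota f sigma y t pi'
         + pert_dot iota Gamma (alpha w) pi' - eps.

Lemma sgn2 dir : sgn dir * sgn dir = 1.
Proof. by case: dir; rewrite /sgn ?mulr1 ?mulrNN ?mulr1. Qed.

Lemma event_in t w j0 dir : (t < T)%N ->
  sgn dir * Gamma (pi t.+1 (alpha w) (iota (sigma t))) j0 <
  sgn dir * Gamma (pi t (alpha w) (iota (sigma t))) j0 ->
  thr t (sigma t) j0 (Gamma (pi t.+1 (alpha w) (iota (sigma t))) j0) dir w
    <= alpha w (sigma t) j0 <=
  thr t (sigma t) j0 (Gamma (pi t.+1 (alpha w) (iota (sigma t))) j0) dir w + cc.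
Proof.
move=> tT.
set s0 := sigma t.
set x1 := pi t (alpha w) (iota s0).
set x2 := pi t.+1 (alpha w) (iota s0).
set b := Gamma x2 j0.
move=> hlt.
set sg := sgn dir.
have sg2 : sg * sg = 1 by exact: sgn2.
set q1 := qof (pi t (alpha w)).
set q2 := qof (pi t.+1 (alpha w)).
have [Pi1 opt1] := ftpl t w (ltnW tT).
have [Pi2 opt2] := ftpl t.+1 w tT.
have Q1 : inQ q1 by exists (pi t (alpha w)).
have Q2 : inQ q2 by exists (pi t.+1 (alpha w)).
have q1s : q1 s0 = x1 by rewrite ffunE.
have q2s : q2 s0 = x2 by rewrite ffunE.
have PBq2 : PB s0 j0 b q2.
  by rewrite /PB q2s eqxx andbT; apply/asboolP.
have PGq1 : PG s0 j0 b dir q1.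
  by rewrite /PG q1s hlt andbT; apply/asboolP.
have [q0 Pq0 eM] : exists2 q0, PB s0 j0 b q0 &
    Mf t s0 j0 b w = fmax (fun q => G0 t (s0, j0) q w) (G0 t (s0, j0) q0 w)
                 [seq q <- enum Qt | PB s0 j0 b q].
  by rewrite /Mf; case: pickP => [q0 Pq0|/(_ q2)]; [exists q0|rewrite PBq2].
set M := fmax _ _ _ in eM.
have [r0 Pr0 em] : exists2 r0, PG s0 j0 b dir r0 &
    mf t s0 j0 b dir w = fmin (fun q => hq t s0 j0 b dir q w) (hq t s0 j0 b dir r0 w)
                 [seq q <- enum Qt | PG s0 j0 b dir q].
  by rewrite /mf; case: pickP => [r0 Pr0|/(_ q1)]; [exists r0|rewrite PGq1].
set m := fmin _ _ _ in em.
have hqE q : hq t s0 j0 b dir q w =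
    (M - G0 t (s0, j0) q w - eps) / (sg * Gamma (q s0) j0 - sg * b).
  by rewrite /hq eM.
have aux z : sg * alpha w s0 j0 * (sg * z) = alpha w s0 j0 * z.
  by rewrite mulrACA sg2 mul1r.
have key : m <= sg * alpha w s0 j0 <= m + (1 + 2 * eps) / delta.
  apply: (@core_det R Qt inQ (fun q => G0 t (s0, j0) q w)
     (fun q => G0 t.+1 (s0, j0) q w) (fun q => sg * Gamma (q s0) j0)
     (sg * b) (sg * alpha w s0 j0) eps delta M m q1 q2) => //.
  all: try (by rewrite q2s); try (by rewrite q1s).
  - move=> q _; rewrite G0S; have /andP[h1 h2] := f01 (q (sigma t)) (y t).
    by apply/andP; split; lra.
  - move=> q _ h.
    have ne' : Gamma (q s0) j0 <> b by move=> e; move: h; rewrite e ltxx.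
    case: adm => _ _ adm3; have := adm3 j0 (q s0) x2 ne'; rewrite -/b.
    move: h; rewrite /sg /sgn; destruct dir; rewrite ?mul1r ?mulN1r => h dl.
      by rewrite gtr0_norm ?subr_gt0 // in dl.
    rewrite ltr0_norm ?subr_lt0 in dl; [lra | lra].
  - move=> q [p Pip <-]; have := opt1 p Pip.
    rewrite !(payoff_split t (s0, j0)) /= -/q1.
    by rewrite !aux; lra.
  - move=> q [p Pip <-]; have := opt2 p Pip.
    rewrite !(payoff_split t.+1 (s0, j0)) /= -/q2.
    by rewrite !aux; lra.
  - move=> q Qq e.
    have eb : Gamma (q s0) j0 = b.
      by move/(congr1 (fun z => sg * z)) : e; rewrite !mulrA sg2 !mul1r.
    rewrite /M; apply: (@fmax_ge R _ (fun q => G0 t (s0, j0) q w)); rewrite mem_filter mem_enum andbT /PB eb eqxx andbT.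
    by apply/asboolP.
  - case: (@fmax_att R _ (fun q => G0 t (s0, j0) q w) (G0 t (s0, j0) q0 w)
                    [seq q <- enum Qt | PB s0 j0 b q]) => [e|[q qin e]].
      move: Pq0 => /andP[/asboolP Qq0 /eqP e0]; exists q0 => //.
      by split; [rewrite e0|rewrite /M e].
    move: qin; rewrite mem_filter => /andP[/andP[/asboolP Qq /eqP e0] _].
    by exists q => //; split; [rewrite e0|rewrite /M e].
  - move=> q Qq h; rewrite -hqE /m; apply: (@fmin_le R _ (fun q => hq t s0 j0 b dir q w)).
    by rewrite mem_filter mem_enum andbT /PG h andbT; apply/asboolP.
  - case: (@fmin_att R _ (fun q => hq t s0 j0 b dir q w) (hq t s0 j0 b dir r0 w)
                    [seq q <- enum Qt | PG s0 j0 b dir q]) => [e|[q qin e]].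
      move: Pr0 => /andP[/asboolP Qr0 h0]; exists r0 => //.
      by split; [|rewrite -hqE /m e].
    move: qin; rewrite mem_filter => /andP[/andP[/asboolP Qq h0] _].
    by exists q => //; split; [|rewrite -hqE /m e].
rewrite /thr -/cc em -/m.
move: key; rewrite -/cc /sg /sgn; destruct dir; rewrite /= ?mul1r ?mulN1r;
  move=> /andP[k1 k2]; apply/andP; split; lra.
Qed.


Hypothesis disp : dispersed D rho ((1 + 2 * eps) / delta).
Hypothesis malpha : forall s j, measurable_fun setT (fun w => alpha w s j).
Hypothesis indep :
  mutually_independent Pr (fun sj : P * 'I_N => fun w => alpha w sj.1 sj.2).
Hypothesis idd :
  identically_distributed Pr (fun sj : P * 'I_N => fun w => alpha w sj.1 sj.2) D.
Hypothesis mpi : forall t s x, (t <= T)%N ->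
     measurable [set w | pi t (alpha w) (iota s) = x].

Definition Sset t s0 j0 b dir : set Omega :=
  [set w | thr t s0 j0 b dir w <= alpha w s0 j0 <= thr t s0 j0 b dir w + cc].

Lemma mZc : forall i : Ix, measurable_fun setT (Zc i).
Proof. by move=> [s j]; exact: malpha. Qed.

Lemma mthrO t s0 j0 b dir : measurable_fun setT (thr t s0 j0 b dir).
Proof.
exact: measurableT_comp (mthr t s0 j0 b dir) (@mtoW R d Omega Ix Zc (s0, j0) mZc).
Qed.

Lemma mSset t s0 j0 b dir : measurable (Sset t s0 j0 b dir).
Proof.
have -> : Sset t s0 j0 b dir =
    (fun w => alpha w s0 j0 - thr t s0 j0 b dir w) @^-1` [set` `[0, cc]].
  by apply/seteqP; split => w; rewrite /Sset /= in_itv /= subr_ge0 lerBlDl.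
rewrite -[X in measurable X]setTI.
apply: measurable_realfun.measurable_funB => //; exact: mthrO.
Qed.

Lemma PrSset t s0 j0 b dir : (Pr (Sset t s0 j0 b dir) <= rho%:E)%E.
Proof.
exact: (@band_bound R d Omega Pr Ix Zc (s0, j0) D mZc indep idd
   (thr t s0 j0 b dir) cc rho (mthr t s0 j0 b dir) disp).
Qed.


Definition V j := undup [seq Gamma x j | x <- enum X].

Lemma ind_ge0 (A : set Omega) w : 0 <= \1_A w :> R.
Proof. by rewrite indicE; case: (w \in A). Qed.

Lemma pointwise w (t : 'I_T) :
  fc f (pi t.+1 (alpha w)) (iota (sigma t)) (y t)
    - fc f (pi t (alpha w)) (iota (sigma t)) (y t) <=
  \sum_(j < N) \sum_(b <- V j)
     (\1_(Sset t (sigma t) j b true) w + \1_(Sset t (sigma t) j b false) w).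
Proof.
rewrite /fc.
set x1 := pi t (alpha w) (iota (sigma t)).
set x2 := pi t.+1 (alpha w) (iota (sigma t)).
have tT : (t < T)%N := ltn_ord t.
case: (eqVneq x2 x1) => [->|ne].
  rewrite subrr; apply: sumr_ge0 => j _; apply: sumr_ge0 => b _.
  by apply: addr_ge0; exact: ind_ge0.
have [j hj] : exists j, Gamma x2 j <> Gamma x1 j.
  by case: adm => adm1 _ _; apply: adm1; apply/eqP.
have d1 : f x2 (y t) - f x1 (y t) <= 1.
  by have /andP[? ?] := f01 x2 (y t); have /andP[? ?] := f01 x1 (y t); lra.
apply: le_trans d1 _.
have F0 : forall j', 0 <= \sum_(b <- V j')
     (\1_(Sset t (sigma t) j' b true) w + \1_(Sset t (sigma t) j' b false) w) :> R.
  move=> j'; apply: sumr_ge0 => b _; apply: addr_ge0; exact: ind_ge0.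
apply: le_trans; last exact: (le_sum_fin j F0).
have inV : Gamma x2 j \in V j.
  by rewrite mem_undup; apply: map_f; rewrite mem_enum.
have F1 : forall b, 0 <=
     \1_(Sset t (sigma t) j b true) w + \1_(Sset t (sigma t) j b false) w :> R.
  by move=> b; apply: addr_ge0; exact: ind_ge0.
apply: le_trans; last exact: (le_sum_mem F1 inV).
case: (ltgtP (Gamma x2 j) (Gamma x1 j)) => h; last by [].
- have := @event_in t w j true tT; rewrite /sgn !mul1r => /(_ h) H.
  rewrite [X in X + _]indicE mem_set //; rewrite lerDl; exact: ind_ge0.
- have := @event_in t w j false tT; rewrite /sgn !mulN1r ltrN2 => /(_ h) H.
  rewrite [X in _ + X]indicE mem_set //; rewrite lerDr; exact: ind_ge0.
Qed.


Local Open Scope ereal_scope.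

Lemma int_sum_le (I : Type) (s : seq I) (h : I -> Omega -> R) (B : I -> R) :
  (forall i, measurable_fun setT (h i)) -> (forall i w, (0 <= h i w)%R) ->
  (forall i, \int[Pr]_w (h i w)%:E <= (B i)%:E) ->
  \int[Pr]_w (\sum_(i <- s) h i w)%:E <= (\sum_(i <- s) B i)%:E.
Proof.
move=> mh h0 hB.
under eq_integral do rewrite -sumEFin.
rewrite ge0_integral_sum //; last first.
- by move=> i w _; rewrite lee_fin.
- by move=> i; apply/measurable_realfun.measurable_EFinP.
rewrite -sumEFin; apply: lee_sum => i _; exact: hB.
Qed.

Lemma leaf t j b :
  \int[Pr]_w (\1_(Sset t (sigma t) j b true) w
              + \1_(Sset t (sigma t) j b false) w)%:E <= (rho + rho)%:E.
Proof.
under eq_integral do rewrite EFinD.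
rewrite ge0_integralD //; try by apply/measurable_realfun.measurable_EFinP;
  apply: measurable_realfun.measurable_indic; exact: mSset.
rewrite !integral_indic ?setIT //; try exact: mSset.
by rewrite EFinD; apply: leeD; exact: PrSset.
Qed.


Lemma rho_ge0 : (0 <= rho)%R.
Proof.
have := disp 0%R; rewrite -lee_fin; apply: le_trans; exact: measure_ge0.
Qed.

Lemma main_bound :
  (\int[Pr]_w
     (\sum_(t < T) (fc f (pi t.+1 (alpha w)) (iota (sigma t)) (y t)
                    - fc f (pi t (alpha w)) (iota (sigma t)) (y t)))%:E
   <= (2 * T%:R * N%:R * kappa%:R * rho)%:E)%E.
Proof.
pose g : Omega -> R := fun w => (\sum_(t < T) (fc f (pi t.+1 (alpha w)) (iota (sigma t)) (y t)
                    - fc f (pi t (alpha w)) (iota (sigma t)) (y t)))%R.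
pose H : Omega -> R := fun w => (\sum_(t < T) \sum_(j < N) \sum_(b <- V j)
     (\1_(Sset t (sigma t) j b true) w + \1_(Sset t (sigma t) j b false) w))%R.
have mH : measurable_fun setT H.
  apply: measurable_sum => t; apply: measurable_sum => j; apply: measurable_sum => b.
  by apply: measurable_realfun.measurable_funD;
    apply: measurable_realfun.measurable_indic; exact: mSset.
have mg : measurable_fun setT g.
  apply: measurable_sum => t.
  have tT : (t < T)%N := ltn_ord t.
  apply: measurable_realfun.measurable_funB.
  - exact: (@meas_fin _ Omega R X (fun w => pi t.+1 (alpha w) (iota (sigma t)))
        (fun x => f x (y t)) (fun x => mpi _ _ x tT)).
  - exact: (@meas_fin _ Omega R X (fun w => pi t (alpha w) (iota (sigma t)))
        (fun x => f x (y t)) (fun x => mpi _ _ x (ltnW tT))).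
have gb : forall w, (`|g w| <= T%:R)%R.
  move=> w; apply: le_trans (ler_norm_sum _ _ _) _.
  have -> : (T%:R : R) = (\sum_(t < T) (1%R : R))%R by rewrite sumr_const card_ord.
  apply: ler_sum => t _.
  rewrite /fc.
  have /andP[? ?] := f01 (pi t.+1 (alpha w) (iota (sigma t))) (y t).
  have /andP[? ?] := f01 (pi t (alpha w) (iota (sigma t))) (y t).
  rewrite ler_norml; apply/andP; split; lra.
pose K : R := (\sum_(t < T) \sum_(j < N) \sum_(b <- V j) (1 + 1))%R.
have Hb : forall w, (`|H w| <= K)%R.
  move=> w; rewrite ger0_norm; last first.
    apply: sumr_ge0 => t _; apply: sumr_ge0 => j _; apply: sumr_ge0 => b _.
    by apply: addr_ge0; exact: ind_ge0.
  apply: ler_sum => t _; apply: ler_sum => j _; apply: ler_sum => b _.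
  by apply: lerD; rewrite indicE; case: (_ \in _); rewrite ?ler01.
have intg : Pr.-integrable setT (EFin \o g).
  apply: measurable_bounded_integrable => //.
    by rewrite [X in X < _](_ : _ = 1) ?ltry //; exact: probability_setT.
  exists T%:R; split; first by rewrite num_real.
  by move=> M TM w _; apply: le_trans (gb w) (ltW TM).
have intH : Pr.-integrable setT (EFin \o H).
  apply: measurable_bounded_integrable => //.
    by rewrite [X in X < _](_ : _ = 1) ?ltry //; exact: probability_setT.
  exists K; split; first by rewrite num_real.
  by move=> M TM w _; apply: le_trans (Hb w) (ltW TM).
apply: (@le_trans _ _ (\int[Pr]_w (H w)%:E)).
  apply: le_integral => // w _.
  rewrite lee_fin; apply: ler_sum => t _; exact: pointwise.
apply: (@le_trans _ _ (\sum_(t < T) \sum_(j < N) \sum_(b <- V j) (rho + rho))%:E).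
  apply: int_sum_le => [t|t w|t].
  - apply: measurable_sum => j; apply: measurable_sum => b.
    by apply: measurable_realfun.measurable_funD;
      apply: measurable_realfun.measurable_indic; exact: mSset.
  - apply: sumr_ge0 => j _; apply: sumr_ge0 => b _.
    by apply: addr_ge0; exact: ind_ge0.
  apply: int_sum_le => [j|j w|j].
  - apply: measurable_sum => b.
    by apply: measurable_realfun.measurable_funD;
      apply: measurable_realfun.measurable_indic; exact: mSset.
  - by apply: sumr_ge0 => b _; apply: addr_ge0; exact: ind_ge0.
  apply: int_sum_le => [b|b w|b].
  - by apply: measurable_realfun.measurable_funD;
      apply: measurable_realfun.measurable_indic; exact: mSset.
  - by apply: addr_ge0; exact: ind_ge0.
  exact: leaf.
rewrite lee_fin.
have r0 := rho_ge0.
have Vk : forall j, (size (V j) <= kappa)%N by case: adm.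
apply: (@le_trans _ _ (\sum_(t < T) \sum_(j < N) (kappa%:R * (rho + rho)))%R).
  apply: ler_sum => t _; apply: ler_sum => j _.
  rewrite sum_seq_const; apply: ler_wpM2r; first lra.
  by rewrite ler_nat.
rewrite !sumr_const !card_ord -[(_ *+ T)%R]mulr_natr -[(_ *+ N)%R]mulr_natr.
have E : (kappa%:R * (rho + rho) * N%:R * T%:R =
          2 * T%:R * N%:R * kappa%:R * rho :> R)%R by ring.
by rewrite E.
Qed.

End Main.

Theorem lemma4p3
  (R : realType) (X : finType) (Y Sigma : Type) (f : X -> Y -> R)
  (N : nat) (Gamma : X -> 'I_N -> R) (kappa : nat) (delta eps rho : R)
  (D : probability R R)
  (P : finType) (iota : P -> Sigma) (Pi : set (Sigma -> X))
  (T : nat) (sigma : nat -> P) (y : nat -> Y)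
  (d : measure_display) (Omega : measurableType d) (Pr : probability Omega R)
  (alpha : Omega -> P -> 'I_N -> R)
  (pi : nat -> (P -> 'I_N -> R) -> Sigma -> X) :
  (* payoffs in [0,1] *)
  (forall x yy, 0 <= f x yy <= 1) ->
  (* P is a subset of Sigma *)
  injective iota ->
  (* Gamma in [0,1]^{|X| x N}, (kappa,delta)-admissible *)
  (forall x j, 0 <= Gamma x j <= 1) ->
  0 < delta -> admissible Gamma kappa delta ->
  0 <= eps ->
  dispersed D rho ((1 + 2 * eps) / delta) ->
  (* the perturbations alpha_{s,j}, (s,j) in P x [N], are i.i.d. with law D *)
  (forall s j, measurable_fun setT (fun w => alpha w s j)) ->
  mutually_independent Pr (fun sj : P * 'I_N => fun w => alpha w sj.1 sj.2) ->
  identically_distributed Pr (fun sj : P * 'I_N => fun w => alpha w sj.1 sj.2) D ->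
  (* the chosen policies are measurable functions of the perturbation *)
  (forall t s x, (t <= T)%N ->
     measurable [set w | pi t (alpha w) (iota s) = x]) ->
  (* Generalized FTPL with translation matrix Gamma^P: pi_t is an
     eps-approximate maximizer of the perturbed cumulative payoff *)
  (forall t w, (t <= T)%N ->
     Pi (pi t (alpha w)) /\
     forall pi' : Sigma -> X, Pi pi' ->
       cum_payoff iota f sigma y t (pi t (alpha w))
         + pert_dot iota Gamma (alpha w) (pi t (alpha w))
       >= cum_payoff iota f sigma y t pi'
         + pert_dot iota Gamma (alpha w) pi' - eps) ->
  (\int[Pr]_w
     (\sum_(t < T) (fc f (pi t.+1 (alpha w)) (iota (sigma t)) (y t)
                    - fc f (pi t (alpha w)) (iota (sigma t)) (y t)))%:E
   <= (2 * T%:R * N%:R * kappa%:R * rho)%:E)%E.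
Proof.
move=> f01 inj G01 del0 adm eps0 disp malpha indep idd mpi ftpl.
by eapply main_bound; eassumption.
Qed.
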